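(* Let $N\geq 2$ and let $\Sigma$ be the two-sided shift on $\{0,1,\dots,N-1\}^{\mathbb{Z}}$, ordered lexicographically as described below. Then $\Sigma$ has no forbidden order patterns of length $L\leq N-1$, and $\Sigma$ has forbidden order patterns of every length $L\geq N+2$.
   Context: $\{0,1,\dots,N-1\}^{\mathbb{Z}}$ is the set of bisequences $\omega=(\omega_n)_{n\in\mathbb{Z}}$ with $\omega_n\in\{0,\dots,N-1\}$, and $\Sigma(\omega)_n=\omega_{n+1}$. One-sided sequences are compared lexicographically ($(a_0,a_1,\dots)<(b_0,b_1,\dots)$ iff at the first index $n$ where they differ, $a_n<b_n$). The order on bisequences: $\omega<\omega'$ iff $(\omega_0,\omega_1,\dots)<(\omega'_0,\omega'_1,\dots)$, or these right sequences are equal and $(\omega_{-1},\omega_{-2},\dots)<(\omega'_{-1},\omega'_{-2},\dots)$. $\mathcal{S}_L$ is the set of permutations $\pi=[\pi_0,\dots,\pi_{L-1}]$ of $\{0,\dots,L-1\}$. $\omega$ defines $\pi$ if $\Sigma^{\pi_0}(\omega)<\dots<\Sigma^{\pi_{L-1}}(\omega)$; $\pi$ is forbidden if no bisequence defines it. *)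

(* Defs.v *)
From mathcomp Require Import all_boot ssralg ssrint fingroup perm.
Set Implicit Arguments. Unset Strict Implicit. Unset Printing Implicit Defensive.
Import GRing.Theory.

Definition biseq (N : nat) := int -> 'I_N.

Definition shift (N : nat) (w : biseq N) : biseq N := fun n => w (n + 1)%R.

Definition shiftn (N : nat) (k : nat) (w : biseq N) : biseq N := iter k (@shift N) w.

Definition lex_lt (N : nat) (a b : nat -> 'I_N) : Prop :=
  exists n : nat, (forall m : nat, (m < n)%N -> a m = b m) /\ (a n < b n)%N.

Definition right_part (N : nat) (w : biseq N) : nat -> 'I_N := fun n => w (Posz n).
Definition left_part (N : nat) (w : biseq N) : nat -> 'I_N := fun n => w (- Posz n.+1)%R.

Definition bi_lt (N : nat) (w w' : biseq N) : Prop :=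
  lex_lt (right_part w) (right_part w') \/
  ((forall n : nat, right_part w n = right_part w' n) /\
   lex_lt (left_part w) (left_part w')).

Definition defines (N L : nat) (w : biseq N) (pi : 'S_L) : Prop :=
  forall i j : 'I_L, val j = (val i).+1 ->
    bi_lt (shiftn (val (pi i)) w) (shiftn (val (pi j)) w).

Definition forbidden (N L : nat) (pi : 'S_L) : Prop :=
  ~ exists w : biseq N, defines w pi.

(* Main.v *)
Require Import Defs.
From mathcomp Require Import all_boot ssralg ssrint fingroup perm.
From mathcomp Require Import zify.
Set Implicit Arguments. Unset Strict Implicit. Unset Printing Implicit Defensive.
Import GRing.Theory.

Section Aux.
Variable N : nat.

Lemma lex_trans (a b c : nat -> 'I_N) : lex_lt a b -> lex_lt b c -> lex_lt a c.
Proof.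
move=> [n [Hn ab]] [m [Hm bc]]; case: (ltngtP n m) => H.
- exists n; split; last by rewrite -(Hm n H).
  by move=> k kn; rewrite Hn // Hm // (ltn_trans kn H).
- exists m; split; last by rewrite (Hn m H).
  by move=> k km; rewrite Hn ?(ltn_trans km H) // Hm.
- subst; exists m; split; last exact: ltn_trans bc.
  by move=> k km; rewrite Hn // Hm.
Qed.

Lemma lex_eqr (a b c : nat -> 'I_N) : lex_lt a b -> (forall n, b n = c n) -> lex_lt a c.
Proof. by move=> [n [Hn ab]] E; exists n; split; [move=> k kn; rewrite Hn // E | rewrite -E]. Qed.

Lemma lex_eql (a b c : nat -> 'I_N) : (forall n, a n = b n) -> lex_lt b c -> lex_lt a c.
Proof. by move=> E [n [Hn ab]]; exists n; split; [move=> k kn; rewrite E Hn | rewrite E]. Qed.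

Lemma lex_irr (a : nat -> 'I_N) : ~ lex_lt a a.
Proof. by move=> [n [_ H]]; rewrite ltnn in H. Qed.

Lemma bi_trans (u v x : biseq N) : bi_lt u v -> bi_lt v x -> bi_lt u x.
Proof.
case=> [H1|[E1 H1]] [H2|[E2 H2]].
- by left; apply: lex_trans H1 H2.
- by left; apply: lex_eqr H1 E2.
- by left; apply: lex_eql E1 H2.
- right; split; first by move=> n; rewrite E1 E2.
  exact: lex_trans H1 H2.
Qed.

Lemma bi_irr (u : biseq N) : ~ bi_lt u u.
Proof. by case=> [H|[_ H]]; apply: lex_irr H. Qed.

Lemma first_sym (u v : biseq N) : bi_lt u v -> (right_part u 0 <= right_part v 0)%N.
Proof.
case=> [[n [Hn H]]|[E _]]; last by rewrite E.
case: n Hn H => [|n] Hn H; first exact: ltnW.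
by rewrite Hn.
Qed.

Lemma int_aux1 (k : nat) : (Posz k + 1)%R = Posz k.+1.
Proof. by rewrite -addn1 PoszD. Qed.

Lemma int_aux2 (k : nat) : (- Posz k.+2 + 1)%R = (- Posz k.+1)%R.
Proof. rewrite -[k.+2]addn1 PoszD opprD -addrA addNr addr0 //. Qed.

Lemma int_aux3 : (- Posz 1 + 1)%R = (0 : int)%R.
Proof. by []. Qed.

Lemma shift_step (u v : biseq N) : right_part u 0 = right_part v 0 -> bi_lt u v ->
  bi_lt (shift u) (shift v).
Proof.
move=> E0; case=> [[n [Hn H]]|[E H]].
- case: n Hn H => [|n] Hn H; first by rewrite E0 ltnn in H.
  left; exists n; split.
    by move=> k kn; rewrite /right_part /shift int_aux1; apply: Hn.
  by rewrite /right_part /shift int_aux1.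
- right; split.
    by move=> k; rewrite /right_part /shift int_aux1; apply: E.
  case: H => [n [Hn H]]; exists n.+1; split.
    case=> [|k] kn; first by rewrite /left_part /shift int_aux3; apply: E0.
    by rewrite /left_part /shift int_aux2; apply: Hn.
  by rewrite /left_part /shift int_aux2.
Qed.

Lemma shiftn_S (k : nat) (w : biseq N) : shift (shiftn k w) = shiftn k.+1 w.
Proof. by rewrite /shiftn iterS. Qed.

Lemma shiftnE (k : nat) (w : biseq N) n : shiftn k w n = w (n + Posz k)%R.
Proof.
elim: k n => [|k IH] n; first by rewrite addr0.
rewrite -shiftn_S /shift IH -addrA; congr (w (_ + _)%R); lia.
Qed.

End Aux.

Definition fpat (N p : nat) : nat :=
  if p <= N.+1 then (if 2 * p <= N then N - 2 * p else 2 * p - N.+1) else p.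
Definition gpos (N p : nat) : nat := if 2 * p <= N then N.+1 - p else N - p.

Lemma fpat_inj N p q : fpat N p = fpat N q -> p = q.
Proof. rewrite /fpat; do ! case: ifP => ?; lia. Qed.

Lemma fpat_lt N L p : N.+2 <= L -> p < L -> fpat N p < L.
Proof. rewrite /fpat; do ! case: ifP => ?; lia. Qed.

Lemma fpat_g N p : p <= N -> fpat N (gpos N p) = (fpat N p).+1.
Proof. move=> Hp; rewrite /gpos; case: ifP => H0; rewrite /fpat; do ! case: ifP => ?; lia. Qed.

Lemma gpos_le N p : gpos N p <= N.+1.
Proof. rewrite /gpos; do ! case: ifP => ?; lia. Qed.

Lemma gpos_lt N p : p < N -> gpos N p.+1 < gpos N p.
Proof. rewrite /gpos; do ! case: ifP => ?; lia. Qed.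

Definition fF N L (HL : N.+2 <= L) (i : 'I_L) : 'I_L := Ordinal (fpat_lt HL (ltn_ord i)).

Lemma fF_inj N L (HL : N.+2 <= L) : injective (fF HL).
Proof. by move=> i j /(congr1 val) /= /fpat_inj H; apply: val_inj. Qed.

Definition rk L (pi : 'S_L) (k : nat) : nat :=
  if insub k is Some i then val ((pi^-1)%g i) else 0.

Lemma rk_lt N L (pi : 'S_L) k : (2 <= N)%N -> (L <= N - 1)%N -> rk pi k < N.
Proof.
move=> hN hL; rewrite /rk; case: insub => [i|]; last lia.
move: (ltn_ord ((pi^-1)%g i)); rewrite /=; move: (nat_of_ord _) => m; lia.
Qed.

Theorem proposition6 (N : nat) (hN : (2 <= N)%N) :
  (forall (L : nat), (L <= N - 1)%N -> forall pi : 'S_L, ~ forbidden N pi) /\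
  (forall (L : nat), (N + 2 <= L)%N -> exists pi : 'S_L, forbidden N pi).
Proof.
split.
- move=> L hL pi; apply; pose w : biseq N := fun n => Ordinal (rk_lt pi (absz n) hN hL).
  exists w => i j hij; left; exists 0; split => // .
  rewrite /right_part !shiftnE !add0r /= /rk !valK !permK; by rewrite hij.
- move=> L; rewrite addn2 => HL; exists (perm (@fF_inj N L HL)) => -[w Hw].
  pose a k := shiftn k w.
  have HH : forall i, i.+1 < L -> bi_lt (a (fpat N i)) (a (fpat N i.+1)).
    move=> i Hi; have Hi' : i < L by apply: ltnW.
    by have := Hw (Ordinal Hi') (Ordinal Hi) erefl; rewrite !permE.
  have Ch : forall i j, i < j -> j < L -> bi_lt (a (fpat N i)) (a (fpat N j)).
    move=> i; elim=> [//|j IH] Hij HjL.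
    have HjL' : j < L by apply: ltnW.
    move: Hij; rewrite ltnS leq_eqVlt => /orP[/eqP->|Hij]; first exact: HH.
    exact: bi_trans (IH Hij HjL') (HH j HjL).
  pose s p := right_part (a (fpat N p)) 0.
  have St : forall p, p < N -> s p < s p.+1.
    move=> p Hp; have Hb := HH p (ltac:(lia) : p.+1 < L).
    have := first_sym Hb; rewrite leq_eqVlt => /orP[/eqP Heq|//].
    have := shift_step (val_inj Heq) Hb; rewrite /a !shiftn_S.
    rewrite -(fpat_g (ltnW Hp)) -(fpat_g Hp) => Hc.
    have Hc2 := Ch _ _ (gpos_lt Hp) (leq_ltn_trans (gpos_le N p) HL).
    by case: (bi_irr (bi_trans Hc Hc2)).
  have Ind : forall p, p <= N -> p <= s p.
    elim=> [//|p IH] Hp; have := St p Hp; have := IH (ltnW Hp); lia.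
  have := Ind N (leqnn N); have := ltn_ord (s N); lia.
Qed.
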